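(* Let $p,l$ be distinct odd primes, and let $\tilde\Gamma$, $\psi$ and $\Gamma=\psi(\tilde\Gamma)$ be as in the context. Elements $x,y\in\tilde\Gamma$ commute (as quaternions) if and only if their images $\psi(x),\psi(y)\in\Gamma$ commute.
   Context: Let $p,l$ be distinct odd primes. Let $\mathbb H(\mathbb Z)$ be the ring of quaternions $x=x_0+x_1i+x_2j+x_3k$ with $x_0,\dots,x_3\in\mathbb Z$, where $i^2=j^2=k^2=-1$, $ij=-ji=k$; write $\bar x=x_0-x_1i-x_2j-x_3k$ and $|x|^2=x\bar x=x_0^2+x_1^2+x_2^2+x_3^2$. Fix $c_p,d_p\in\mathbb Q_p$ with $c_p^2+d_p^2+1=0$ and $c_l,d_l\in\mathbb Q_l$ with $c_l^2+d_l^2+1=0$. Define $\psi:\mathbb H(\mathbb Z)\setminus\{0\}\to G:=PGL_2(\mathbb Q_p)\times PGL_2(\mathbb Q_l)$ by sending $x$ to the class of the pair $\left(\begin{pmatrix} x_0+x_1c_p+x_3d_p & -x_1d_p+x_2+x_3c_p\\ -x_1d_p-x_2+x_3c_p & x_0-x_1c_p-x_3d_p\end{pmatrix},\begin{pmatrix} x_0+x_1c_l+x_3d_l & -x_1d_l+x_2+x_3c_l\\ -x_1d_l-x_2+x_3c_l & x_0-x_1c_l-x_3d_l\end{pmatrix}\right)$. It is multiplicative. Let $\tilde\Gamma$ be the set of $x\in\mathbb H(\mathbb Z)$ such that $|x|^2=p^rl^s$ for some integers $r,s\ge 0$, and such that $x_0$ is odd and $x_1,x_2,x_3$ are even if $|x|^2\equiv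 1\pmod 4$, while $x_1$ is even and $x_0,x_2,x_3$ are odd if $|x|^2\equiv 3\pmod 4$. Then $\Gamma=\psi(\tilde\Gamma)$ is a torsion-free cocompact lattice in $G$. *)

(* Defs.v *)
From HB Require Import structures.
From mathcomp Require Import all_boot all_order all_algebra.
Set Implicit Arguments. Unset Strict Implicit. Unset Printing Implicit Defensive.
Import Order.TTheory GRing.Theory Num.Theory.
Local Open Scope ring_scope.

(* Integral quaternions x0 + x1 i + x2 j + x3 k, i^2=j^2=k^2=-1, ij=-ji=k. *)
Record quat := Quat { q0 : int; q1 : int; q2 : int; q3 : int }.

Definition qmul (x y : quat) : quat :=
  Quat (q0 x * q0 y - q1 x * q1 y - q2 x * q2 y - q3 x * q3 y)
       (q0 x * q1 y + q1 x * q0 y + q2 x * q3 y - q3 x * q2 y)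
       (q0 x * q2 y - q1 x * q3 y + q2 x * q0 y + q3 x * q1 y)
       (q0 x * q3 y + q1 x * q2 y - q2 x * q1 y + q3 x * q0 y).

Definition qnorm (x : quat) : int :=
  q0 x ^+ 2 + q1 x ^+ 2 + q2 x ^+ 2 + q3 x ^+ 2.

Definition zodd (z : int) : bool := ~~ (2 %| z)%Z.
Definition zeven (z : int) : bool := (2 %| z)%Z.

Definition in_Gamma_tilde (p l : nat) (x : quat) : Prop :=
  exists r s : nat,
    qnorm x = ((p ^ r * l ^ s)%N)%:Z /\
    (((p ^ r * l ^ s) %% 4 = 1)%N ->
       [&& zodd (q0 x), zeven (q1 x), zeven (q2 x) & zeven (q3 x)]) /\
    (((p ^ r * l ^ s) %% 4 = 3)%N ->
       [&& zeven (q1 x), zodd (q0 x), zodd (q2 x) & zodd (q3 x)]).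

(* The 2x2 matrix representing x over a field K, given c, d in K
   with c^2 + d^2 + 1 = 0 (one component of psi, before projectivising). *)
Definition psi_mat (K : fieldType) (c d : K) (x : quat) : 'M[K]_2 :=
  let x0 : K := (q0 x)%:~R in let x1 : K := (q1 x)%:~R in
  let x2 : K := (q2 x)%:~R in let x3 : K := (q3 x)%:~R in
  \matrix_(i < 2, j < 2)
    match nat_of_ord i, nat_of_ord j with
    | 0, 0 => x0 + x1 * c + x3 * d
    | 0, _ => - (x1 * d) + x2 + x3 * c
    | _, 0 => - (x1 * d) - x2 + x3 * c
    | _, _ => x0 - x1 * c - x3 * d
    end.

(* Two classes [A], [B] in PGL_2(K) commute iff AB = lambda BA for some
   lambda in K^x (literal unfolding of [A][B] = [B][A] in GL_2(K)/K^x). *)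
Definition pgl_commute (K : fieldType) (A B : 'M[K]_2) : Prop :=
  exists lambda : K, lambda != 0 /\ A *m B = lambda *: (B *m A).

Definition psi_commute (Kp Kl : fieldType) (cp dp : Kp) (cl dl : Kl)
  (x y : quat) : Prop :=
  pgl_commute (psi_mat cp dp x) (psi_mat cp dp y) /\
  pgl_commute (psi_mat cl dl x) (psi_mat cl dl y).

(* Main.v *)
Require Import Defs.
From HB Require Import structures.
From mathcomp Require Import all_boot all_order all_algebra ring zify.
Import Order.TTheory GRing.Theory Num.Theory.
Local Open Scope ring_scope.
Lemma psi_mul (K : fieldType) (c d : K) (x y : quat) :
  c ^+ 2 + d ^+ 2 + 1 = 0 ->
  psi_mat c d x *m psi_mat c d y = psi_mat c d (qmul x y).
Proof.
move=> hcd.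
case: x => x0 x1 x2 x3; case: y => y0 y1 y2 y3.
apply/matrixP=> i j; rewrite !mxE !big_ord_recl big_ord0 !mxE /=.
rewrite !(rmorphB, rmorphD, rmorphM) /=.
set X0 := (x0%:~R : K); set X1 := (x1%:~R : K); set X2 := (x2%:~R : K); set X3 := (x3%:~R : K).
set Y0 := (y0%:~R : K); set Y1 := (y1%:~R : K); set Y2 := (y2%:~R : K); set Y3 := (y3%:~R : K).
have h : forall k a b : K, a - b = k * (c^+2+d^+2+1) -> a = b.
  by move=> k a b; rewrite hcd mulr0 => /eqP; rewrite subr_eq0 => /eqP.
case: i => [[|[|i]] Hi] //=; case: j => [[|[|j]] Hj] //=.
- by apply: (h (X1*Y1+X3*Y3)); ring.
- by apply: (h (X1*Y3-X3*Y1)); ring.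
- by apply: (h (X3*Y1-X1*Y3)); ring.
- by apply: (h (X1*Y1+X3*Y3)); ring.
Qed.

Lemma lin_recover (K : fieldType) (c d : K) (hcd : c ^+ 2 + d ^+ 2 + 1 = 0)
  (two : (2:K) != 0) (A0 A1 A2 A3 B0 B1 B2 B3 la : K) :
 A0 + A1*c + A3*d = la*(B0 + B1*c + B3*d) ->
 -(A1*d) + A2 + A3*c = la*(-(B1*d) + B2 + B3*c) ->
 -(A1*d) - A2 + A3*c = la*(-(B1*d) - B2 + B3*c) ->
 A0 - A1*c - A3*d = la*(B0 - B1*c - B3*d) ->
 [/\ A0 = la*B0, A1 = la*B1, A2 = la*B2 & A3 = la*B3].
Proof.
have toz : forall a b : K, a = b -> a - b = 0 by move=> a b ->; rewrite subrr.
move=> /toz e1 /toz e2 /toz e3 /toz e4.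
have h2 : forall a b : K, 2 * (a - b) = 0 -> a = b.
  move=> a b /eqP; rewrite mulf_eq0 (negbTE two) /= subr_eq0 => /eqP //.
split; apply: h2.
- have := congr2 (fun u v => u + v) e1 e4; rewrite addr0 => <-; ring.
- have := congr2 (fun u v => u + v) (congr2 (fun u v => c*(u - v)) e1 e4)
     (congr2 (fun u v => -d*(u+v)) e2 e3).
  rewrite !(subrr, addr0, mulr0, oppr0) => H.
  have : -(2 * (A1 - la * B1)) + 2 * (A1 - la * B1) * (c ^+ 2 + d ^+ 2 + 1) = 0.
    by rewrite -H; ring.
  by rewrite hcd mulr0 addr0 => /eqP; rewrite oppr_eq0 => /eqP.
- have := congr2 (fun u v => u - v) e2 e3; rewrite subr0 => <-; ring.
- have := congr2 (fun u v => u + v) (congr2 (fun u v => d*(u - v)) e1 e4)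
     (congr2 (fun u v => c*(u+v)) e2 e3).
  rewrite !(subrr, addr0, mulr0, oppr0) => H.
  have : -(2 * (A3 - la * B3)) + 2 * (A3 - la * B3) * (c ^+ 2 + d ^+ 2 + 1) = 0.
    by rewrite -H; ring.
  by rewrite hcd mulr0 addr0 => /eqP; rewrite oppr_eq0 => /eqP.
Qed.

Lemma intr0 (K : fieldType) (hK : [pchar K] =i pred0) (z : int) :
  (z%:~R : K) = 0 -> z = 0.
Proof.
have h := (pcharf0P K).1 hK.
case: z => n /=.
- by move/eqP; rewrite h => /eqP ->.
- by rewrite NegzE mulrNz => /eqP; rewrite oppr_eq0 h.
Qed.

Lemma intr_inj0 (K : fieldType) (hK : [pchar K] =i pred0) (a b : int) :
  (a%:~R : K) = b%:~R -> a = b.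
Proof.
move=> e; apply: subr0_eq; apply: (@intr0 K hK).
by rewrite rmorphB /= e subrr.
Qed.

Lemma sq3 (a b c : int) : a^+2 + b^+2 + c^+2 = 0 -> [/\ a = 0, b = 0 & c = 0].
Proof.
move/eqP; rewrite paddr_eq0 ?addr_ge0 ?sqr_ge0 // paddr_eq0 ?sqr_ge0 //.
by rewrite !sqrf_eq0 => /andP[/andP[/eqP-> /eqP->] /eqP->].
Qed.

Lemma gamma_facts p l x : odd p -> odd l -> in_Gamma_tilde p l x ->
  q0 x != 0 /\ qnorm x != 0.
Proof.
move=> op ol [r [s [hn [h1 h3]]]].
have ho : odd (p ^ r * l ^ s) by rewrite oddM !oddX op ol !orbT.
have hm : ((p ^ r * l ^ s) %% 4 = 1 \/ (p ^ r * l ^ s) %% 4 = 3)%N.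
  have := modn2 (p ^ r * l ^ s)%N; rewrite ho.
  move: (p ^ r * l ^ s)%N => N; lia.
split.
- apply/eqP => E.
  by case: hm => [/h1 | /h3] /and4P; rewrite E => -[].
- rewrite hn; apply/eqP => -[] E; by rewrite E in ho.
Qed.

Theorem lemma2p1 (p l : nat) (Kp Kl : fieldType)
  (cp dp : Kp) (cl dl : Kl) :
  prime p -> prime l -> odd p -> odd l -> p != l ->
  [pchar Kp] =i pred0 -> [pchar Kl] =i pred0 ->
  cp ^+ 2 + dp ^+ 2 + 1 = 0 -> cl ^+ 2 + dl ^+ 2 + 1 = 0 ->
  forall x y : quat, in_Gamma_tilde p l x -> in_Gamma_tilde p l y ->
  (qmul x y = qmul y x <-> psi_commute cp dp cl dl x y).
Proof.
move=> pp pl op ol pne hKp hKl hcp hcl x y gx gy; split.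
  move=> e; split; exists 1; split; rewrite ?oner_neq0 // scale1r !psi_mul //.
  - by rewrite e.
  - by rewrite e.
move=> [[la [_ H]] _]; rewrite !psi_mul // in H.
have two : (2:Kp) != 0 by rewrite ((pcharf0P _).1 hKp).
have [y0nz _] := gamma_facts _ _ _ op ol gy.
have [_ nxnz] := gamma_facts _ _ _ op ol gx.
have F1 : q0 (qmul x y) = q0 (qmul y x) by rewrite /=; ring.
have F2 : q1 (qmul x y) ^+ 2 + q2 (qmul x y) ^+ 2 + q3 (qmul x y) ^+ 2
        = q1 (qmul y x) ^+ 2 + q2 (qmul y x) ^+ 2 + q3 (qmul y x) ^+ 2.
  by rewrite /=; ring.
have F3 : 2 * q0 y * qnorm x = 2 * q0 x * q0 (qmul x y)
   + (q1 (qmul x y) + q1 (qmul y x)) * q1 x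
   + (q2 (qmul x y) + q2 (qmul y x)) * q2 x
   + (q3 (qmul x y) + q3 (qmul y x)) * q3 x.
  by rewrite /qnorm /=; ring.
move: (qmul x y) (qmul y x) H F1 F2 F3 => a b H F1 F2 F3.
have E := fun i j => congr1 (fun M : 'M_2 => M i j) H.
have E00 := E ord0 ord0; have E01 := E ord0 ord_max.
have E10 := E ord_max ord0; have E11 := E ord_max ord_max.
rewrite !mxE /= in E00 E01 E10 E11.
have [h0 h1 h2 h3] := @lin_recover _ _ _ hcp two _ _ _ _ _ _ _ _ _ E00 E01 E10 E11.
have eqq : q0 a = q0 b -> q1 a = q1 b -> q2 a = q2 b -> q3 a = q3 b -> a = b.
  by case: a {H E E00 E01 E10 E11 h0 h1 h2 h3 F1 F2 F3} => ? ? ? ?;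
     case: b => ? ? ? ? /= -> -> -> ->.
case: (eqVneq la 1) => [e1|ne1].
  rewrite e1 !mul1r in h0 h1 h2 h3.
  by apply: eqq; apply: (@intr_inj0 Kp hKp).
case: (eqVneq la (-1)) => [em1|nem1].
  rewrite em1 !mulN1r in h0 h1 h2 h3.
  have S : forall u v : int, (u%:~R : Kp) = - v%:~R -> u + v = 0.
    by move=> u v e; apply: (@intr0 Kp hKp); rewrite intrD e addNr.
  have S0 := S _ _ h0; have S1 := S _ _ h1; have S2 := S _ _ h2; have S3 := S _ _ h3.
  have A0 : q0 a = 0 by lia.
  rewrite S1 S2 S3 A0 !mulr0 !mul0r !addr0 in F3.
  by move/eqP: F3; rewrite !mulf_eq0 (negbTE y0nz) (negbTE nxnz).
have G := congr1 (fun z : int => (z%:~R : Kp)) F2.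
rewrite /= !intrD !(rmorphXn _ 2) /= h1 h2 h3 in G.
have G' : (la - 1) * (la + 1) * ((q1 b)%:~R ^+ 2 + (q2 b)%:~R ^+ 2 + (q3 b)%:~R ^+ 2) = 0.
  set B1 := ((q1 b)%:~R : Kp) in G *; set B2 := ((q2 b)%:~R : Kp) in G *;
  set B3 := ((q3 b)%:~R : Kp) in G *.
  have -> : (la - 1) * (la + 1) * (B1 ^+ 2 + B2 ^+ 2 + B3 ^+ 2) =
    ((la * B1) ^+ 2 + (la * B2) ^+ 2 + (la * B3) ^+ 2) - (B1 ^+ 2 + B2 ^+ 2 + B3 ^+ 2) by ring.
  by rewrite G subrr.
move/eqP: G'; rewrite !mulf_eq0 subr_eq0 (negbTE ne1) addr_eq0 (negbTE nem1) /=.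
move=> /eqP G'.
have : q1 b ^+ 2 + q2 b ^+ 2 + q3 b ^+ 2 = 0.
  by apply: (@intr0 Kp hKp); rewrite !intrD !(rmorphXn _ 2).
case/sq3 => B1 B2 B3.
rewrite B1 B2 B3 !mulr0 in h1 h2 h3.
apply: eqq => //; rewrite ?B1 ?B2 ?B3; exact: (@intr0 Kp hKp).
Qed.
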